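(* Let $M\le V$ be a subspace such that there is an $X\in\mathcal G$ with $M\le X$ and $\dim(X/M)=1$, and let $\mathcal G[M\rangle:=\{E\le V\mid M\le E \text{ and } \dim(E/M)=1\}$ (the star with centre $M$). Then: (1) $\mathcal G[M\rangle\subseteq\mathcal G$; (2) any two distinct elements $E,E'\in\mathcal G[M\rangle$ are adjacent; (3) two adjacent elements $E,E'\in\mathcal G$ both belong to $\mathcal G[M\rangle$ if and only if $E\cap E'=M$.
   Context: $K$ is a (not necessarily commutative) field and $V$ is a left vector space over $K$ of arbitrary (possibly infinite) dimension with $\dim V>2$. $\mathcal G:=\{X\le V\mid X\cong V/X\}$ is the set of subspaces of $V$ isomorphic (as $K$-vector spaces) to their quotient space, assumed nonempty. Dimensions are vector space dimensions. Two elements $X,Y\in\mathcal G$ are called adjacent if $\dim((X+Y)/X)=\dim((X+Y)/Y)=1$, equivalently $\dim(X/(X\cap Y))=\dim(Y/(X\cap Y))=1$. *)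

(* Defs.v *)
(* Subspaces of a (possibly infinite-dimensional) left vector
   space V over a division ring K are represented as Prop-valued predicates. *)
From HB Require Import structures.
From mathcomp Require Import all_boot all_order all_algebra.
Set Implicit Arguments. Unset Strict Implicit. Unset Printing Implicit Defensive.
Import GRing.Theory.
Local Open Scope ring_scope.

Definition division_ring (K : unitRingType) : Prop :=
  forall x : K, x != 0 -> x \is a GRing.unit.

Section Defs.
Variables (K : unitRingType) (V : lmodType K).

Definition subspace (U : V -> Prop) : Prop :=
  U 0 /\ (forall (k : K) (x y : V), U x -> U y -> U (k *: x + y)).

Definition dim_gt2 : Prop :=
  exists u v w : V, forall a b c : K,
    a *: u + b *: v + c *: w = 0 -> [/\ a = 0, b = 0 & c = 0].

(* X is isomorphic to V/X: a K-linear bijection h : X -> V/X, where h x is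
   represented by a chosen representative in V of the coset h(x) + X. *)
Definition iso_to_quotient (X : V -> Prop) : Prop :=
  exists h : V -> V,
    (forall (k : K) (x y : V), X x -> X y ->
        X (h (k *: x + y) - (k *: h x + h y)))
    /\ (forall x y : V, X x -> X y -> X (h x - h y) -> x = y)
    /\ (forall v : V, exists x, X x /\ X (v - h x)).

Definition inG (X : V -> Prop) : Prop := subspace X /\ iso_to_quotient X.

Definition quot_dim1 (M X : V -> Prop) : Prop :=
  (forall v, M v -> X v) /\
  exists u, X u /\ ~ M u /\ forall x, X x -> exists k : K, M (x - k *: u).

Definition adjacent (X Y : V -> Prop) : Prop :=
  quot_dim1 (fun v => X v /\ Y v) X /\ quot_dim1 (fun v => X v /\ Y v) Y.

Definition star (M E : V -> Prop) : Prop := subspace E /\ quot_dim1 M E.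

End Defs.

(* Main.v *)
Require Import Defs.
From mathcomp Require Import all_boot all_order all_algebra.
From mathcomp Require Import boolp classical_sets.
From Stdlib Require Import Classical ClassicalEpsilon FunctionalExtensionality PropExtensionality.
Set Implicit Arguments. Unset Strict Implicit. Unset Printing Implicit Defensive.
Import GRing.Theory.
Local Open Scope ring_scope.

Section Basic.
Variables (K : unitRingType) (V : lmodType K).
Hypothesis hK : division_ring K.

Lemma sub0 (S : V -> Prop) : subspace S -> S 0.
Proof. by case. Qed.

Lemma subD (S : V -> Prop) x y : subspace S -> S x -> S y -> S (x + y).
Proof. by move=> [_ h] hx hy; have := h 1 x y hx hy; rewrite scale1r. Qed.

Lemma subZ (S : V -> Prop) k x : subspace S -> S x -> S (k *: x).
Proof. by move=> [h0 h] hx; have := h k x 0 hx h0; rewrite addr0. Qed.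

Lemma subN (S : V -> Prop) x : subspace S -> S x -> S (- x).
Proof. by move=> hS hx; rewrite -scaleN1r; apply: subZ. Qed.

Lemma subB (S : V -> Prop) x y : subspace S -> S x -> S y -> S (x - y).
Proof. by move=> hS hx hy; apply: subD => //; apply: subN. Qed.

Lemma unitK (k : K) : k != 0 -> k \is a GRing.unit.
Proof. exact: hK. Qed.

Lemma invZK (k : K) (v : V) : k != 0 -> k^-1 *: (k *: v) = v.
Proof. by move=> hk; rewrite scalerA mulVr ?scale1r //; apply: hK. Qed.

Lemma star_gen (M E : V -> Prop) w : subspace M -> star M E -> E w -> ~ M w ->
  forall x, E x -> exists k, M (x - k *: w).
Proof.
move=> hM [hE [hME [u0 [Eu0 [nMu0 gen]]]]] Ew nMw x Ex.
have [j hj] := gen w Ew.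
have j0 : j != 0.
  apply/eqP => j0; apply: nMw; by move: hj; rewrite j0 scale0r subr0.
have [k hk] := gen x Ex.
exists (k * j^-1).
have -> : x - (k * j^-1) *: w = (x - k *: u0) - (k * j^-1) *: (w - j *: u0).
  rewrite scalerBr scalerA mulrVK; last exact: hK.
  by rewrite opprB addrA subrK.
by apply: subB => //; apply: subZ.
Qed.

Lemma star_sub (M E E' : V -> Prop) w : star M E -> subspace E' ->
  (forall v, M v -> E' v) -> E' w -> (forall x, E x -> exists k, M (x - k *: w)) ->
  forall x, E x -> E' x.
Proof.
move=> _ hE' hME' Ew gen x Ex.
have [k hk] := gen x Ex.
have -> : x = (x - k *: w) + k *: w by rewrite subrK.
by apply: subD => //; [apply: hME' | apply: subZ].
Qed.

Lemma part2 (M : V -> Prop) (hM : subspace M) (E E' : V -> Prop) :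
  star M E -> star M E' -> ~ (forall v, E v <-> E' v) -> adjacent E E'.
Proof.
move=> sE sE' neq.
have key : forall (A B : V -> Prop), star M A -> star M B -> ~ (forall v, A v <-> B v) ->
   quot_dim1 (fun v => A v /\ B v) A.
  move=> A B sA sB nAB.
  have [hA [hMA [w [Aw [nMw gen]]]]] := sA.
  have nBw : ~ B w.
    move=> Bw; apply: nAB => v; split.
      apply: (star_sub sA (proj1 sB) (proj1 (proj2 sB)) Bw gen).
    apply: (star_sub sB hA hMA Aw); exact: star_gen hM sB Bw nMw.
  split; first by move=> v [].
  exists w; split => //; split; first by case.
  move=> x Ax; have [k hk] := gen x Ax; exists k; split.
    exact: hMA. exact: (proj1 (proj2 sB)).
split; first exact: key.
have -> : (fun v => E v /\ E' v) = (fun v => E' v /\ E v).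
  by apply: functional_extensionality => v; apply: propositional_extensionality; tauto.
apply: key => // h; apply: neq => v; have := h v; tauto.
Qed.

Lemma part3 (M : V -> Prop) (hM : subspace M) (E E' : V -> Prop) :
  inG E -> inG E' -> adjacent E E' ->
      ((star M E /\ star M E') <-> (forall v, (E v /\ E' v) <-> M v)).
Proof.
move=> [hE _] [hE' _] [[_ [u [Eu [nu genu]]]] [_ [u' [Eu' [nu' genu']]]]].
split.
  move=> [sE sE'] v; split; last first.
    by move=> Mv; split; [apply: (proj1 (proj2 sE)) | apply: (proj1 (proj2 sE'))].
  move=> [Ev E'v]; apply: NNPP => nMv.
  have gen := star_gen hM sE Ev nMv.
  have sub := star_sub sE hE' (proj1 (proj2 sE')) E'v gen.
  by apply: nu; split => //; apply: sub.
move=> H; split.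
  split => //; split; first by move=> v /H [].
  exists u; split => //; split; first by move=> /H.
  by move=> x Ex; have [k hk] := genu x Ex; exists k; apply/H.
split => //; split; first by move=> v /H [].
exists u'; split => //; split; first by move=> /H.
by move=> x Ex; have [k hk] := genu' x Ex; exists k; apply/H.
Qed.

End Basic.

Section Transport.
Variables (K : unitRingType) (V : lmodType K).

Lemma transport (X E : V -> Prop) (phi : V -> V) :
  (forall k x y, phi (k *: x + y) = k *: phi x + phi y) ->
  (forall v, phi (phi v) = v) -> (forall v, E v <-> X (phi v)) ->
  iso_to_quotient X -> iso_to_quotient E.
Proof.
move=> lin inv hEX [h [hl [hi hs]]].
have phiD : forall x y, phi (x + y) = phi x + phi y.
  by move=> x y; have := lin 1 x y; rewrite !scale1r.
have phi0 : phi 0 = 0.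
  have := phiD 0 0; rewrite addr0 => H.
  by apply: (@addrI _ (phi 0)); rewrite addr0 -H.
have phiN : forall x, phi (- x) = - phi x.
  by move=> x; apply/eqP; rewrite -subr_eq0 opprK -phiD addNr phi0.
have phiB : forall x y, phi (x - y) = phi x - phi y by move=> x y; rewrite phiD phiN.
exists (fun v => phi (h (phi v))); split; last split.
- move=> k x y /hEX Ex /hEX Ey; apply/hEX.
  by rewrite phiB !lin !inv; apply: hl.
- move=> x y /hEX Ex /hEX Ey /hEX; rewrite phiB !inv => H.
  by rewrite -(inv x) -(inv y) (hi _ _ Ex Ey H).
- move=> v; have [x [Xx Hx]] := hs (phi v).
  exists (phi x); split; first by apply/hEX; rewrite inv.
  by apply/hEX; rewrite phiB !inv.
Qed.

End Transport.

Section Zorn.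
Variables (K : unitRingType) (V : lmodType K).
Hypothesis hK : division_ring K.
Variables (M : V -> Prop) (u w : V).
Hypothesis hM : subspace M.
Hypothesis hind : forall a b, M (a *: u + b *: w) -> a = 0 /\ b = 0.

Definition good (N : V -> Prop) := subspace N /\ (forall v, M v -> N v) /\
  (forall a b, N (a *: u + b *: w) -> a = 0 /\ b = 0).

Lemma exists_max : exists N, good N /\
  forall B : V -> Prop, (forall v, N v -> B v) -> ~ (forall v, B v -> N v) -> ~ good B.
Proof.
pose P := fun N : set V => (forall v, ~ N v) \/ good N.
have [A [PA maxA]] : exists A : set V, P A /\ (forall B : set V, (A `<` B)%classic -> ~ P B).
  apply: Zorn_bigcup => F FP tot.
  case: (classic (exists v, (\bigcup_(X in F) X)%classic v)); last first.
    by move=> H; left => v Hv; apply: H; exists v.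
  move=> [v0 [X0 FX0 X0v0]].
  have goodF : forall X, F X -> forall v, X v -> good X.
    by move=> X FX v Xv; case: (FP X FX) => // H; case: (H v).
  have both : forall X Y x y, F X -> F Y -> X x -> Y y ->
      exists Z, F Z /\ good Z /\ Z x /\ Z y.
    move=> X Y x y FX FY Xx Yy; case: (tot X Y FX FY) => sub.
      by exists Y; split => //; split; [exact: goodF FY y Yy | split => //; apply: sub].
    by exists X; split => //; split; [exact: goodF FX x Xx | split => //; apply: sub].
  have g0 := goodF X0 FX0 v0 X0v0.
  right; split; last split.
  - split; first by exists X0 => //; apply: sub0 (proj1 g0).
    move=> k x y [X FX Xx] [Y FY Yy].
    have [Z [FZ [gZ [Zx Zy]]]] := both X Y x y FX FY Xx Yy.
    by exists Z => //; apply: (proj2 (proj1 gZ)).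
  - by move=> v Mv; exists X0 => //; apply: (proj1 (proj2 g0)).
  - move=> a b [X FX Xab]; exact: (proj2 (proj2 (goodF X FX _ Xab))).
case: PA => [A0|gA].
  exfalso; apply: (maxA M); last by right; split => //; split.
  split; first by move=> v /A0.
  by move=> H; apply: (A0 0); apply: H; apply: sub0.
exists A; split => // B AB nBA gB; apply: (maxA B); last by right.
by split.
Qed.

End Zorn.
Lemma E1 (G : zmodType) (v p q p' q' : G) :
  (v - p' - q') - (v - p - q) = (p - p') + (q - q').
Proof.
by rewrite !opprD !opprK addrACA [v - p' + _]addrACA subrr add0r [-p' + p]addrC [-q' + q]addrC.
Qed.
Lemma E3 (G : zmodType) (x y p q p' q' : G) :
  (x + y) - (p + p') - (q + q') = (x - p - q) + (y - p' - q').
Proof.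
by rewrite !opprD [x + y + _]addrACA (addrACA (x - p)).
Qed.
Lemma E4 (G : zmodType) (x a b : G) : (x - a) + b = x + (b - a).
Proof. by rewrite -addrA [- a + b]addrC. Qed.
Lemma E5 (G : zmodType) (p q r : G) : (p + q - r) - p - q = - r.
Proof. by rewrite -addrA -opprD addrAC subrr add0r. Qed.

Section Swap.
Variables (K : unitRingType) (V : lmodType K).
Hypothesis hK : division_ring K.
Variables (M N : V -> Prop) (u w : V).
Hypothesis hN : subspace N.
Hypothesis hMN : forall v, M v -> N v.
Hypothesis hind : forall a b, N (a *: u + b *: w) -> a = 0 /\ b = 0.
Hypothesis hmax : forall B : V -> Prop, (forall v, N v -> B v) -> ~ (forall v, B v -> N v) ->
  ~ (subspace B /\ (forall v, M v -> B v) /\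
  (forall a b, B (a *: u + b *: w) -> a = 0 /\ b = 0)).

Lemma decomp v : exists p : K * K, N (v - p.1 *: u - p.2 *: w).
Proof.
apply: NNPP => H.
pose B := fun x => exists n c, N n /\ x = n + c *: v.
apply: (hmax (B := B)); [| | split; [|split]].
- by move=> x Nx; rewrite /B; exists x, 0; rewrite scale0r addr0.
- move=> sub; apply: H; exists (0, 0) => /=; rewrite !scale0r !subr0.
  have Bv : B v by rewrite /B; exists 0, 1; rewrite scale1r add0r; split => //; apply: sub0.
  exact: sub Bv.
- split; first by exists 0, 0; rewrite scale0r addr0; split => //; apply: sub0.
  move=> k x y [n1 [c1 [N1 ->]]] [n2 [c2 [N2 ->]]].
  exists (k *: n1 + n2), (k * c1 + c2); split.
    by apply: (proj2 hN).
  by rewrite scalerDr scalerDl -scalerA addrACA.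
- by move=> x Mx; exists x, 0; rewrite scale0r addr0; split => //; apply: hMN.
- move=> a b [n [c [Nn Heq]]].
  have [c0|c0] := eqVneq c 0.
    by apply: hind; rewrite Heq c0 scale0r addr0.
  exfalso; apply: H; exists (c^-1 * a, c^-1 * b) => /=.
  have cv : c *: v = a *: u + b *: w - n by rewrite Heq addrC addKr.
  have -> : v = c^-1 *: (c *: v) by rewrite invZK.
  rewrite cv -!scalerA !scalerDr scalerN E5.
  by apply: subN => //; apply: subZ.
Qed.

Lemma uniqd v a b a' b' : N (v - a *: u - b *: w) -> N (v - a' *: u - b' *: w) ->
  a = a' /\ b = b'.
Proof.
move=> H1 H2; have := subB hN H2 H1; rewrite E1 -!scalerBl => /hind [h1 h2].
by split; apply: subr0_eq.
Qed.

Definition dpair v := proj1_sig (constructive_indefinite_description _ (decomp v)).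
Definition dd v := (dpair v).1 - (dpair v).2.

Lemma dd_spec v a b : N (v - a *: u - b *: w) -> dd v = a - b.
Proof.
move=> H; rewrite /dd /dpair; case: constructive_indefinite_description => p /= Hp.
by have [-> ->] := uniqd Hp H.
Qed.

Lemma dd_dec v : N (v - (dpair v).1 *: u - (dpair v).2 *: w).
Proof. by rewrite /dpair; case: constructive_indefinite_description. Qed.

Lemma dd_lin k x y : dd (k *: x + y) = k * dd x + dd y.
Proof.
have Hx := dd_dec x; have Hy := dd_dec y.
set a := (dpair x).1 in Hx *; set b := (dpair x).2 in Hx *.
set a' := (dpair y).1 in Hy *; set b' := (dpair y).2 in Hy *.
rewrite (dd_spec Hx) (dd_spec Hy).
rewrite (@dd_spec _ (k * a + a') (k * b + b')).
  by rewrite mulrBr opprD addrACA.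
rewrite !scalerDl -!scalerA E3 -!scalerBr.
by apply: (proj2 hN).
Qed.

Definition swp v := v + dd v *: (w - u).

Lemma swp_lin k x y : swp (k *: x + y) = k *: swp x + swp y.
Proof. by rewrite /swp dd_lin scalerDl -scalerA [in RHS]scalerDr addrACA. Qed.

Lemma dd_wu : dd (w - u) = -1 - 1.
Proof.
apply: dd_spec; rewrite scaleN1r scale1r opprK subrK subrr.
exact: sub0.
Qed.

Lemma swp_inv v : swp (swp v) = v.
Proof.
rewrite {1}/swp.
have -> : dd (swp v) = - dd v.
  rewrite /swp addrC dd_lin dd_wu mulrBr mulrN1 mulr1.
  by rewrite subrK.
by rewrite /swp scaleNr addrK.
Qed.

Lemma swp_u x k : M (x - k *: u) -> swp x = (x - k *: u) + k *: w.
Proof.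
move=> H; rewrite /swp (@dd_spec _ k 0).
  by rewrite subr0 scalerBr E4.
by rewrite scale0r subr0; apply: hMN.
Qed.

Lemma swp_w x k : M (x - k *: w) -> swp x = (x - k *: w) + k *: u.
Proof.
move=> H; rewrite /swp (@dd_spec _ 0 k).
  by rewrite sub0r scaleNr scalerBr opprB addrA addrAC.
by rewrite scale0r subr0; apply: hMN.
Qed.

End Swap.

Section Part1.
Variables (K : unitRingType) (V : lmodType K).
Hypothesis hK : division_ring K.

Lemma part1 (M X E : V -> Prop) : subspace M -> inG X -> quot_dim1 M X -> star M E -> inG E.
Proof.
move=> hM [hX isoX] qX sE.
have [hE [hME [w [Ew [nMw genw]]]]] := sE.
have [hMX [u [Xu [nMu genu]]]] := qX.
have sX : star M X by [].
split => //.
case: (classic (X w)) => [Xw|nXw].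
  apply: (@transport _ _ X E id) => //.
  move=> v; split.
    by apply: (star_sub sE hX hMX Xw genw).
  by apply: (star_sub sX hE hME Ew); apply: (star_gen hK hM sX Xw nMw).
have hind : forall a b, M (a *: u + b *: w) -> a = 0 /\ b = 0.
  move=> a b Mab.
  have b0 : b = 0.
    have [//|b0] := eqVneq b 0; exfalso; apply: nXw.
    have Xb : X (b *: w).
      have -> : b *: w = (a *: u + b *: w) - a *: u by rewrite addrC addKr.
      by apply: subB => //; [apply: hMX | apply: subZ].
    by rewrite -(invZK hK w b0); apply: subZ.
  split => //; have [//|a0] := eqVneq a 0; exfalso; apply: nMu.
  by rewrite -(invZK hK u a0); apply: subZ => //; move: Mab; rewrite b0 scale0r addr0.
have [N [[hN [hMN hindN]] hmax]] := exists_max hM hind.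
apply: (@transport _ _ X E (swp hK hN hMN hindN hmax)); last exact: isoX.
- exact: swp_lin.
- exact: swp_inv.
move=> v; split.
  move=> Ev; have [k hk] := genw v Ev.
  rewrite (swp_w hK hN hMN hindN hmax hk).
  by apply: subD => //; [apply: hMX | apply: subZ].
move=> Xv; have [k hk] := genu _ Xv.
rewrite -(swp_inv hK hN hMN hindN hmax v) (swp_u hK hN hMN hindN hmax hk).
by apply: subD => //; [apply: hME | apply: subZ].
Qed.

End Part1.

Theorem lemma2p1 (K : unitRingType) (hK : division_ring K) (V : lmodType K)
  (hdim : dim_gt2 V) (hGne : exists X : V -> Prop, inG X)
  (M : V -> Prop) (hM : subspace M)
  (hMX : exists X : V -> Prop, inG X /\ quot_dim1 M X) :
  (forall E : V -> Prop, star M E -> inG E) /\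
  (forall E E' : V -> Prop, star M E -> star M E' ->
      ~ (forall v, E v <-> E' v) -> adjacent E E') /\
  (forall E E' : V -> Prop, inG E -> inG E' -> adjacent E E' ->
      ((star M E /\ star M E') <-> (forall v, (E v /\ E' v) <-> M v))).
Proof.
have [X [GX qX]] := hMX.
split; first by move=> E sE; apply: (part1 hK hM GX qX sE).
split; first by move=> E E'; apply: part2.
by move=> E E'; apply: part3.
Qed.
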